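(* Assume $A_n$ satisfies (C1) and (C2), and let $(\beta_0,B_0)\in\Theta$. Then there exists $\delta>0$ such that $$\limsup_{n\to\infty}\frac1n\log\mathbb P_{n,\beta_0,B_0}\Big(\Big|\sum_{i=1}^nX_im_i(\mathbf X)\Big|<n\delta\Big)<0.$$
   Context: For each $n$, $A_n$ is a known symmetric $n\times n$ matrix with non-negative entries and zero diagonal. The Ising model is $\mathbb P_{n,\beta,B}(\mathbf X=\mathbf x)=Z_n(\beta,B)^{-1}\exp(\frac{\beta}{2}\mathbf x^\top A_n\mathbf x+B\sum_i x_i)$ on $\{-1,1\}^n$. (C1): there is a constant $\gamma<\infty$ with $\max_{i}\sum_{j}A_n(i,j)\le\gamma$ for all $n$; (C2): $\liminf_n\frac1n\sum_{i,j}A_n(i,j)>0$. $\Theta=\{(\beta,B):\beta>0,B\ne0\}$. $m_i(\mathbf x)=\sum_jA_n(i,j)x_j$. *)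

(* Defs.v *)
From Stdlib Require Import Reals List.
Import ListNotations.
Open Scope R_scope.

Fixpoint rsum (n : nat) (f : nat -> R) : R :=
  match n with
  | O => 0
  | S k => rsum k f + f k
  end.

(* All spin configurations of length n, encoded as lists of booleans
   (true = spin +1, false = spin -1). *)
Fixpoint cube (n : nat) : list (list bool) :=
  match n with
  | O => [ [] ]
  | S k => flat_map (fun s => [true :: s; false :: s]) (cube k)
  end.

Definition spin (s : list bool) (i : nat) : R :=
  if nth i s false then 1 else -1.

(* A : the sequence of matrices; A n i j is the (i,j) entry of A_n
   (indices 0..n-1; entries outside are irrelevant). *)
Definition matseq := nat -> nat -> nat -> R.

Definition mloc (A : matseq) (n : nat) (s : list bool) (i : nat) : R :=
  rsum n (fun j => A n i j * spin s j).

Definition weight (A : matseq) (n : nat) (beta B : R) (s : list bool) : R :=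
  exp (beta / 2 * rsum n (fun i => spin s i * mloc A n s i)
       + B * rsum n (fun i => spin s i)).

Definition lsum (l : list (list bool)) (f : list bool -> R) : R :=
  fold_right (fun s acc => f s + acc) 0 l.

Definition Zpart (A : matseq) (n : nat) (beta B : R) : R :=
  lsum (cube n) (weight A n beta B).

Definition ising_prob (A : matseq) (n : nat) (beta B : R)
  (E : list bool -> Prop) (Edec : forall s, {E s} + {~ E s}) : R :=
  lsum (cube n) (fun s => if Edec s then weight A n beta B s else 0)
  / Zpart A n beta B.

Definition Tstat (A : matseq) (n : nat) (s : list bool) : R :=
  rsum n (fun i => spin s i * mloc A n s i).

Definition small_event (A : matseq) (n : nat) (delta : R) (s : list bool) : Prop :=
  Rabs (Tstat A n s) < INR n * delta.

Definition small_event_dec (A : matseq) (n : nat) (delta : R) :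
  forall s, {small_event A n delta s} + {~ small_event A n delta s} :=
  fun s => Rlt_dec (Rabs (Tstat A n s)) (INR n * delta).

Definition symmetric_nonneg_zerodiag (A : matseq) : Prop :=
  forall n i j, (i < n)%nat -> (j < n)%nat ->
    A n i j = A n j i /\ 0 <= A n i j /\ A n i i = 0.

Definition cond_C1 (A : matseq) : Prop :=
  exists gamma : R, forall n i, (i < n)%nat -> rsum n (A n i) <= gamma.

(* liminf_n (1/n) sum_{i,j} A_n(i,j) > 0, unfolded *)
Definition cond_C2 (A : matseq) : Prop :=
  exists c : R, 0 < c /\ exists N : nat, forall n : nat, (N <= n)%nat ->
    c < / INR n * rsum n (fun i => rsum n (fun j => A n i j)).

(* Main.v *)
Require Import Defs.
From Stdlib Require Import Reals Lra Lia Psatz List Arith.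
Import ListNotations.
Open Scope R_scope.

Fixpoint rprod (n : nat) (f : nat -> R) : R :=
  match n with O => 1 | S k => rprod k f * f k end.

Lemma exp_le' x y : x <= y -> exp x <= exp y.
Proof. intros [H|H]; [left; apply exp_increasing; auto | subst; lra]. Qed.

Lemma rsum_shift n f : rsum (S n) f = f 0%nat + rsum n (fun i => f (S i)).
Proof. induction n; simpl in *; [ring|]. rewrite IHn. ring. Qed.

Lemma rprod_shift n f : rprod (S n) f = f 0%nat * rprod n (fun i => f (S i)).
Proof. induction n; simpl in *; [ring|]. rewrite IHn. ring. Qed.

Lemma rsum_ext n f g : (forall i, (i < n)%nat -> f i = g i) -> rsum n f = rsum n g.
Proof. induction n; intros H; simpl; auto. rewrite IHn by (intros; apply H; lia). rewrite H by lia. auto. Qed.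

Lemma rprod_ext n f g : (forall i, (i < n)%nat -> f i = g i) -> rprod n f = rprod n g.
Proof. induction n; intros H; simpl; auto. rewrite IHn by (intros; apply H; lia). rewrite H by lia. auto. Qed.

Lemma rsum_scal c n f : c * rsum n f = rsum n (fun i => c * f i).
Proof. induction n; simpl; [ring|]. rewrite <- IHn. ring. Qed.

Lemma rprod_pos n f : (forall i, 0 < f i) -> 0 < rprod n f.
Proof. intros H; induction n; simpl; [lra|]. specialize (H n). nra. Qed.

Lemma exp_rsum n f : exp (rsum n f) = rprod n (fun i => exp (f i)).
Proof. induction n; simpl; [apply exp_0|]. rewrite exp_plus, IHn; auto. Qed.

Lemma rprod_pick i n a f : (i < n)%nat ->
  rprod n (fun k => if Nat.eqb k i then a * f k else f k) = a * rprod n f.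
Proof.
  induction n; intros H; [lia|]. simpl.
  destruct (Nat.eq_dec i n) as [->|Hne].
  - rewrite Nat.eqb_refl.
    rewrite (rprod_ext n _ f); [ring|].
    intros k Hk. destruct (Nat.eqb_spec k n); [lia|auto].
  - rewrite IHn by lia. destruct (Nat.eqb_spec n i); [lia|]. ring.
Qed.

Lemma lsum_app l1 l2 f : lsum (l1 ++ l2) f = lsum l1 f + lsum l2 f.
Proof. induction l1; simpl; [ring|]. rewrite IHl1. ring. Qed.

Lemma lsum_ext l f g : (forall s, f s = g s) -> lsum l f = lsum l g.
Proof. intros H; induction l; simpl; auto. rewrite IHl, H; auto. Qed.

Lemma lsum_plus l f g : lsum l (fun s => f s + g s) = lsum l f + lsum l g.
Proof. induction l; simpl; [ring|]. rewrite IHl. ring. Qed.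

Lemma lsum_scal l c f : lsum l (fun s => c * f s) = c * lsum l f.
Proof. induction l; simpl; [ring|]. rewrite IHl. ring. Qed.

Lemma lsum_le l f g : (forall s, f s <= g s) -> lsum l f <= lsum l g.
Proof. intros H; induction l; simpl; [lra|]. specialize (H a). lra. Qed.

Lemma lsum_rsum l n F :
  lsum l (fun s => rsum n (fun i => F i s)) = rsum n (fun i => lsum l (F i)).
Proof.
  induction n; simpl.
  - induction l; simpl; auto. rewrite IHl; ring.
  - rewrite lsum_plus, IHn. auto.
Qed.

Lemma lsum_flat l F :
  lsum (flat_map (fun s => [true :: s; false :: s]) l) F
  = lsum l (fun s => F (true :: s) + F (false :: s)).
Proof. induction l; simpl; auto. rewrite IHl. ring. Qed.

Lemma cube_prod n : forall g : nat -> bool -> R,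
  lsum (cube n) (fun s => rprod n (fun i => g i (nth i s false)))
  = rprod n (fun i => g i true + g i false).
Proof.
  induction n; intros g.
  - simpl. ring.
  - change (cube (S n)) with (flat_map (fun s => [true :: s; false :: s]) (cube n)).
    rewrite lsum_flat.
    rewrite (lsum_ext _ _ (fun s => (g 0%nat true + g 0%nat false) *
       rprod n (fun i => g (S i) (nth i s false)))).
    + rewrite lsum_scal, (IHn (fun i => g (S i))), rprod_shift. auto.
    + intros s. rewrite !rprod_shift. simpl nth. ring.
Qed.
Definition Wt (B : R) (n : nat) (s : list bool) := exp (B * rsum n (spin s)).
Definition eB (B : R) (b : bool) := if b then exp B else exp (- B).
Definition sg (b : bool) : R := if b then 1 else -1.

Lemma Wt_prod B n s : Wt B n s = rprod n (fun k => eB B (nth k s false)).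
Proof.
  unfold Wt. rewrite rsum_scal, exp_rsum. apply rprod_ext. intros k _.
  unfold spin, eB. destruct (nth k s false); f_equal; ring.
Qed.

Lemma Q1 B n : lsum (cube n) (Wt B n) = rprod n (fun _ => exp B + exp (-B)).
Proof.
  rewrite (lsum_ext _ _ (fun s => rprod n (fun k => eB B (nth k s false)))) by apply Wt_prod.
  rewrite (cube_prod n (fun _ b => eB B b)). apply rprod_ext. intros; reflexivity.
Qed.

Lemma corr B n i j : (i < n)%nat -> (j < n)%nat -> i <> j ->
  lsum (cube n) (fun s => Wt B n s * (spin s i * spin s j))
  = ((exp B - exp (-B)) / (exp B + exp (-B))) *
    (((exp B - exp (-B)) / (exp B + exp (-B))) * rprod n (fun _ => exp B + exp (-B))).
Proof.
  intros Hi Hj Hij.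
  set (h := fun k b => (if Nat.eqb k i then sg b else 1) *
                   ((if Nat.eqb k j then sg b else 1) * eB B b)).
  rewrite (lsum_ext _ _ (fun s => rprod n (fun k => h k (nth k s false)))).
  2:{ intros s. rewrite Wt_prod. symmetry.
      rewrite (rprod_ext n _ (fun k => if Nat.eqb k i then spin s i *
         ((if Nat.eqb k j then sg (nth k s false) else 1) * eB B (nth k s false))
         else ((if Nat.eqb k j then sg (nth k s false) else 1) * eB B (nth k s false)))).
      2:{ intros k _. unfold h. destruct (Nat.eqb_spec k i); [subst; unfold spin, sg; auto | ring]. }
      rewrite rprod_pick by auto.
      rewrite (rprod_ext n (fun k => (if Nat.eqb k j then sg (nth k s false) else 1) * eB B (nth k s false))
         (fun k => if Nat.eqb k j then spin s j * eB B (nth k s false) else eB B (nth k s false))).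
      2:{ intros k _. destruct (Nat.eqb_spec k j); [subst; unfold spin, sg; auto | ring]. }
      rewrite rprod_pick by auto. ring. }
  rewrite cube_prod.
  assert (HC : 0 < exp B + exp (-B)) by (pose proof (exp_pos B); pose proof (exp_pos (-B)); lra).
  set (C := exp B + exp (-B)) in *. set (D := exp B - exp (-B)).
  rewrite (rprod_ext n _ (fun k => if Nat.eqb k i then (D / C) *
        (if Nat.eqb k j then (D/C) * C else C) else (if Nat.eqb k j then (D/C) * C else C))).
  2:{ intros k _. unfold h, sg, eB, D, C. destruct (Nat.eqb_spec k i); destruct (Nat.eqb_spec k j);
      try lia; cbv beta iota; unfold C in HC; first [ring | field; lra]. }
  rewrite rprod_pick by auto.
  rewrite (rprod_pick j n (D/C) (fun _ => C)) by auto. reflexivity.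
Qed.

Lemma lsum_lin l x y f g :
  lsum l (fun s => x * f s + y * g s) = x * lsum l f + y * lsum l g.
Proof. induction l; simpl; [ring|]. rewrite IHl. ring. Qed.

Lemma lsum_nonneg l f : (forall s, 0 <= f s) -> 0 <= lsum l f.
Proof. intros H; induction l; simpl; [lra|]. specialize (H a). lra. Qed.

Lemma Wt_pos B n s : 0 < Wt B n s.
Proof. apply exp_pos. Qed.

Theorem lemma2 (A : matseq)
  (hA : symmetric_nonneg_zerodiag A) (hC1 : cond_C1 A) (hC2 : cond_C2 A)
  (beta0 B0 : R) (hbeta : 0 < beta0) (hB : B0 <> 0) :
  exists delta : R, 0 < delta /\
    exists eps : R, 0 < eps /\ exists N : nat, forall n : nat, (N <= n)%nat ->
      ising_prob A n beta0 B0 (small_event A n delta) (small_event_dec A n delta)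
        <= exp (- eps * INR n).
Proof.
  destruct hC2 as [c [hc [N HN]]].
  assert (HC : 0 < exp B0 + exp (-B0)) by (pose proof (exp_pos B0); pose proof (exp_pos (-B0)); lra).
  set (C := exp B0 + exp (-B0)) in *.
  set (D := exp B0 - exp (-B0)).
  assert (HD : D <> 0).
  { unfold D. intro H0. destruct (Rtotal_order B0 0) as [H1|[H1|H1]]; [| contradiction |].
    - pose proof (exp_increasing B0 (-B0)); lra.
    - pose proof (exp_increasing (-B0) B0); lra. }
  set (t := D / C).
  assert (Ht : 0 < t * t).
  { assert (t <> 0) by (unfold t; intro H0; apply HD; apply (Rmult_eq_reg_r (/ C));
      [unfold Rdiv in H0; lra | apply Rinv_neq_0_compat; lra]).
    nra. }
  exists (t * t * c / 2). split; [nra|].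
  exists (beta0 * (t * t * c) / 4). split; [assert (0 < t*t*c) by nra; nra|].
  exists N. intros n Hn.
  set (delta := t * t * c / 2).
  set (Cn := rprod n (fun _ => C)).
  assert (HCn : 0 < Cn) by (apply rprod_pos; intros; lra).
  set (SA := rsum n (fun i => rsum n (fun j => A n i j))).
  assert (HSA : c * INR n <= SA).
  { specialize (HN n Hn). destruct n as [|m].
    - unfold SA; simpl; lra.
    - assert (Hpos : 0 < INR (S m)) by (apply lt_0_INR; lia).
      fold SA in HN.
      apply Rmult_lt_compat_l with (r := INR (S m)) in HN; auto.
      rewrite <- Rmult_assoc, Rinv_r in HN by lra. lra. }
  assert (HQ1 : lsum (cube n) (fun s => Wt B0 n s) = Cn) by (apply Q1).
  assert (HQT : lsum (cube n) (fun s => Wt B0 n s * Tstat A n s) = t * t * SA * Cn).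
  { rewrite (lsum_ext _ _ (fun s => rsum n (fun i => rsum n (fun j =>
        A n i j * (Wt B0 n s * (spin s i * spin s j)))))).
    2:{ intros s. unfold Tstat, mloc. rewrite rsum_scal. apply rsum_ext. intros i _.
        rewrite rsum_scal, rsum_scal. apply rsum_ext. intros j _. ring. }
    rewrite (lsum_rsum _ n (fun i s => rsum n (fun j => A n i j * (Wt B0 n s * (spin s i * spin s j))))).
    rewrite (rsum_ext n _ (fun i => (t * t * Cn) * rsum n (fun j => A n i j))).
    - unfold SA. rewrite <- rsum_scal. ring.
    - intros i Hi. rewrite (lsum_rsum _ n (fun j s => A n i j * (Wt B0 n s * (spin s i * spin s j)))).
      rewrite rsum_scal. apply rsum_ext. intros j Hj.
      rewrite lsum_scal.
      destruct (Nat.eq_dec i j) as [<-|Hij].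
      + destruct (hA n i i Hi Hi) as [_ [_ ->]]. ring.
      + rewrite corr by auto. fold C D t Cn. ring. }
  assert (Hweight : forall s, weight A n beta0 B0 s = Wt B0 n s * exp (beta0 / 2 * Tstat A n s)).
  { intros s. unfold weight, Wt, Tstat. rewrite <- exp_plus. f_equal. change (rsum n (spin s)) with (rsum n (fun i => spin s i)). ring. }
  set (E1 := exp (beta0 * (INR n * delta) / 2)).
  assert (Hnum : lsum (cube n) (fun s => if small_event_dec A n delta s then weight A n beta0 B0 s else 0)
                 <= E1 * Cn).
  { rewrite <- HQ1, <- lsum_scal. apply lsum_le. intros s.
    pose proof (Wt_pos B0 n s). pose proof (exp_pos (beta0 * (INR n * delta) / 2)).
    destruct (small_event_dec A n delta s) as [Hs|Hs].
    - rewrite Hweight. unfold small_event in Hs. pose proof (Rle_abs (Tstat A n s)).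
      assert (exp (beta0 / 2 * Tstat A n s) <= E1) by (apply exp_le'; nra).
      nra.
    - unfold E1. nra. }
  assert (Hnum0 : 0 <= lsum (cube n) (fun s => if small_event_dec A n delta s then weight A n beta0 B0 s else 0)).
  { apply lsum_nonneg. intros s. destruct (small_event_dec A n delta s); [left; apply exp_pos | lra]. }
  set (a := beta0 / 2 * (t * t * SA)).
  assert (HZ : exp a * Cn <= Zpart A n beta0 B0).
  { unfold Zpart. rewrite (lsum_ext _ _ _ Hweight).
    apply Rle_trans with (lsum (cube n) (fun s => (exp a * (1 - a)) * Wt B0 n s
                   + (exp a * (beta0 / 2)) * (Wt B0 n s * Tstat A n s))).
    - rewrite lsum_lin, HQT. change (lsum (cube n) (Wt B0 n)) with (lsum (cube n) (fun s => Wt B0 n s)). rewrite HQ1. apply Req_le. unfold a. ring.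
    - apply lsum_le. intros s. pose proof (Wt_pos B0 n s).
      set (y := beta0 / 2 * Tstat A n s).
      assert (exp y = exp a * exp (y - a)) by (rewrite <- exp_plus; f_equal; ring).
      pose proof (exp_ineq1_le (y - a)). pose proof (exp_pos a).
      rewrite H0.
      replace (exp a * (1 - a) * Wt B0 n s + exp a * (beta0 / 2) * (Wt B0 n s * Tstat A n s))
        with (Wt B0 n s * (exp a * (1 + (y - a)))) by (unfold y; ring).
      apply Rmult_le_compat_l; [lra|]. apply Rmult_le_compat_l; lra. }
  unfold ising_prob.
  assert (HaCn : 0 < exp a * Cn) by (pose proof (exp_pos a); nra).
  unfold Rdiv. apply Rle_trans with (E1 * Cn * / (exp a * Cn)).
  - apply Rmult_le_compat; auto.
    + left; apply Rinv_0_lt_compat; lra.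
    + apply Rinv_le_contravar; auto.
  - assert (E1 * Cn * / (exp a * Cn) = exp (beta0 * (INR n * delta) / 2 - a)).
    { unfold Rminus. rewrite exp_plus, exp_Ropp. unfold E1. pose proof (exp_pos a). field. split; lra. }
    rewrite H. apply exp_le'. unfold delta, a.
    assert (0 <= beta0 * (t * t) * (SA - c * INR n)) by (apply Rmult_le_pos; nra).
    nra.
Qed.
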